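(* For every positive integer $t$ and every $c\in(0,1)$ there exists $\delta=\delta(t,c)\in(0,1)$ such that for all $n>c\delta^{-1}$ the following holds. Let $V$ be a set of $n$ vertices and let $G_R$ and $G_B$ be graphs on vertex set $V$. If $G_R$ has at most $\delta n^2$ edges and $G_B$ has at least $cn^2$ edges, then there exists a set $S\subseteq V$ with $|S|\geq t$ such that $G_B[S]$ has at least $\frac{c}{2}|S|^2$ edges and $G_R[S]$ has no edges. *)

(* Defs.v *)
From mathcomp Require Import all_boot all_order all_algebra.
From mathcomp Require Import all_classical all_reals.
Set Implicit Arguments. Unset Strict Implicit. Unset Printing Implicit Defensive.

Definition simple_graph (V : finType) (E : rel V) : Prop :=
  (forall x y, E x y = E y x) /\ (forall x, ~~ E x x).

Definition induced_edges (V : finType) (E : rel V) (S : {set V}) : {set {set V}} :=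
  [set e : {set V} | (e \subset S) &&
     [exists x, exists y, (x != y) && (e == [set x; y]) && E x y]].

Definition n_edges_in (V : finType) (E : rel V) (S : {set V}) : nat :=
  #|induced_edges E S|.

Definition n_edges (V : finType) (E : rel V) : nat := n_edges_in E [set: V].

(* Main.v *)
Require Import Defs.
From mathcomp Require Import all_boot all_order all_algebra.
From mathcomp Require Import all_classical all_reals.
From mathcomp Require Import zify ring lra.
From mathcomp Require Import fintype finset bigop.
Import Order.TTheory GRing.Theory Num.Theory.

Lemma supersets_card (V : finType) (e : {set V}) m :
  #|e| = 2 ->
  #|[set S : {set V} | e \subset S & #|S| == m.+2]| = 'C(#|V| - 2, m).
Proof.
move=> he.
have -> : [set S : {set V} | e \subset S & #|S| == m.+2] =
   (fun A => A :|: e) @: [set A : {set V} | A \subset ~: e & #|A| == m].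
  apply/setP => S; apply/idP/imsetP.
    rewrite inE => /andP[eS /eqP cS]; exists (S :\: e).
      rewrite inE; apply/andP; split.
        by apply/subsetP => x; rewrite !inE => /andP[].
      rewrite cardsD (setIidPr eS) cS he; apply/eqP; lia.
    apply/setP => x; rewrite !inE; move: (subsetP eS x).
    by case: (x \in e); case: (x \in S) => //= /(_ isT).
  move=> [A]; rewrite inE => /andP[Ae /eqP cA] ->.
  rewrite inE subsetUr /= cardsU cA he.
  have -> : A :&: e = set0.
    apply/setP => x; rewrite !inE; apply/negbTE/negP => /andP[xA xe].
    by move/subsetP: Ae => /(_ x xA); rewrite inE xe.
  by rewrite cards0 subn0 addn2.
rewrite card_in_imset.
  by rewrite cards_draws -he cardsCs setCK.
move=> A B; rewrite !inE => /andP[Ae _] /andP[Be _] h.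
apply/setP => x; have := congr1 (fun X : {set V} => x \in X) h => /=.
rewrite !inE; case xe: (x \in e); last by rewrite !orbF.
move/subsetP: Ae => /(_ x); rewrite inE xe => hA.
move/subsetP: Be => /(_ x); rewrite inE xe => hB.
by case: (x \in A) hA => [/(_ isT)|]; case: (x \in B) hB => [/(_ isT)|].
Qed.
Lemma cnt_cond (T : finType) (A : {set T}) (P : pred T) :
  #|[set x in A | P x]| = \sum_(x in A) (P x : nat).
Proof.
rewrite -sum1_card (eq_bigl (fun x => (x \in A) && P x)); last by move=> x; rewrite !inE.
by rewrite big_mkcondr /=; apply: eq_bigr => x _; case: (P x).
Qed.

Lemma induced_sub (V : finType) (E : rel V) S :
  induced_edges E S = [set e in induced_edges E setT | e \subset S].
Proof. by apply/setP => e; rewrite !inE subsetT /= andbC. Qed.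

Lemma edge_card2 (V : finType) (E : rel V) e :
  e \in induced_edges E setT -> #|e| = 2.
Proof.
rewrite inE => /andP[_ /existsP[x /existsP[y /andP[/andP[xy /eqP ->] _]]]].
by rewrite cards2 xy.
Qed.

Lemma sum_edges (V : finType) (E : rel V) m :
  \sum_(S in [set S : {set V} | #|S| == m.+2]) n_edges_in E S
   = (n_edges E * 'C(#|V| - 2, m))%N.
Proof.
rewrite /n_edges_in.
under eq_bigr => S _ do rewrite induced_sub cnt_cond.
rewrite exchange_big /= /n_edges /n_edges_in -sum_nat_const.
apply: eq_bigr => e he.
rewrite -(@supersets_card V e m (@edge_card2 V E e he)).
rewrite (_ : [set S : {set V} | e \subset S & #|S| == m.+2] = [set S in [set S : {set V} | #|S| == m.+2] | e \subset S]); first by rewrite cnt_cond.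
by apply/setP => S; rewrite !inE andbC.
Qed.
Lemma edges_le (V : finType) (E : rel V) S : (n_edges_in E S <= #|S| * #|S|)%N.
Proof.
apply: (@leq_trans #|[set e : {set V} | e \subset S & #|e| == 2]|).
  apply: subset_leq_card; apply/subsetP => e; rewrite !inE.
  move=> /andP[-> /existsP[x /existsP[y /andP[/andP[xy /eqP ->] _]]]].
  by rewrite cards2 xy.
rewrite cards_draws bin2.
rewrite leq_half_double.
have : (#|S| * #|S|.-1 <= #|S| * #|S|)%N := leq_mul (leqnn _) (leq_pred _).
lia.
Qed.

Lemma bin_rel n t :
  ('C(n - 2, t.+1) * (n * (n - 1)) = 'C(n, t.+3) * (t.+3 * t.+2))%N.
Proof.
have h1 := mul_bin_diag n t.+2.
have h2 := mul_bin_diag n.-1 t.+1.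
rewrite subn2 subn1 (mulnC n) mulnA (mulnC _ n.-1) h2.
rewrite -mulnA (mulnC _ n) h1.
by rewrite mulnC (mulnC t.+3) mulnA.
Qed.
Local Open Scope ring_scope.

Theorem lemma4p6 (R : realType) (t : nat) (c : R) :
  (0 < t)%N -> 0 < c < 1 ->
  exists delta : R, 0 < delta < 1 /\
    forall (V : finType) (ER EB : rel V),
      c / delta < (#|V|)%:R ->
      simple_graph ER -> simple_graph EB ->
      (n_edges ER)%:R <= delta * (#|V|)%:R ^+ 2 ->
      c * (#|V|)%:R ^+ 2 <= (n_edges EB)%:R ->
      exists S : {set V},
        [/\ (t <= #|S|)%N,
            c / 2 * (#|S|)%:R ^+ 2 <= (n_edges_in EB S)%:R
          & n_edges_in ER S = 0%N].
Proof.
move=> t0 /andP[c0 c1].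
set k : nat := t.+3.
set kR : R := k%:R.
have kR1 : 4 <= kR by rewrite /kR ler_nat /k; lia.
set M : R := kR ^+ 2.
have M0 : 0 < M by rewrite /M exprn_gt0 // (lt_le_trans _ kR1).
exists (c / (4 * M)); split.
  apply/andP; split; first by rewrite divr_gt0 // mulr_gt0.
  rewrite ltr_pdivrMr ?mulr_gt0 // mul1r (lt_le_trans c1) //.
  rewrite /M expr2; nra.
move=> V ER EB hn _ _ hR hB.
set n := #|V|; set nR : R := n%:R.
have cd : c / (c / (4 * M)) = 4 * M.
  by field; rewrite !gt_eqF.
rewrite cd -/nR in hn.
have kn : (k <= n)%N.
  rewrite -(ler_nat R) -/kR -/nR; apply: ltW; apply: le_lt_trans hn.
  rewrite /M expr2; nra.
set Ek := [set S : {set V} | #|S| == k].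
set F := fun S => (n_edges_in EB S)%:R - M * (n_edges_in ER S)%:R : R.
have [S SE HS] : exists2 S, S \in Ek & c / 2 * kR ^+ 2 < F S.
  have [//|H] := pselect (exists2 S, S \in Ek & c / 2 * kR ^+ 2 < F S).
  exfalso.
  have H' : forall S, S \in Ek -> F S <= c / 2 * kR ^+ 2.
    move=> S SE; rewrite leNgt; apply/negP => h; apply: H; by exists S.
  have hsum : \sum_(S in Ek) F S <= \sum_(S in Ek) (c / 2 * kR ^+ 2) by apply: ler_sum.
  rewrite sumr_const card_draws -/n -[X in _ <= X]mulr_natl /F sumrB -mulr_sumr -!natr_sum in hsum.
  rewrite !(sum_edges V _ t.+1) -/n !natrM in hsum.
  set Bv := (n_edges EB)%:R in hsum hB; set Rv := (n_edges ER)%:R in hsum hR.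
  set Dv := ('C(n - 2, t.+1))%:R in hsum; set Cv := ('C(n, k))%:R in hsum.
  have hbin := congr1 (fun m : nat => m%:R : R) (bin_rel n t); simpl in hbin.
  rewrite !natrM -/Dv -/Cv in hbin.
  set k2R : R := (t.+2)%:R in hbin.
  have ek : kR = k2R + 1 by rewrite /kR /k2R /k natr1.
  set n1R : R := (n - 1)%:R in hbin.
  have en : nR = n1R + 1 by rewrite /nR /n1R natr1 subn1 prednK // (leq_trans _ kn).
  have Cv0 : 0 < Cv by rewrite /Cv ltr0n bin_gt0.
  have k23 : 3 <= k2R by rewrite /k2R ler_nat; lia.
  have n10 : 0 <= n1R by rewrite /n1R ler0n.
  have hMR : M * Rv <= c / 4 * nR ^+ 2.
    have -> : c / 4 * nR ^+ 2 = M * (c / (4 * M) * nR ^+ 2) by field; rewrite gt_eqF.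
    by rewrite ler_pM2l.
  pose x := Bv - M * Rv.
  have hx : 3 / 4 * c * nR ^+ 2 <= x by rewrite /x; lra.
  have h1 : x * Dv * (nR * n1R) <= Cv * (c / 2 * kR ^+ 2) * (nR * n1R).
    apply: ler_wpM2r; first by rewrite mulr_ge0 // en; lra.
    have -> : x * Dv = Bv * Dv - M * (Rv * Dv) by rewrite /x; ring.
    exact: hsum.
  rewrite -mulrA hbin in h1.
  have Ck0 : 0 < Cv * kR by rewrite mulr_gt0 // ek; lra.
  have h2 : x * k2R <= c / 2 * kR * nR * n1R.
    rewrite -(ler_pM2l Ck0).
    have -> : Cv * kR * (x * k2R) = x * (Cv * (kR * k2R)) by ring.
    have -> : Cv * kR * (c / 2 * kR * nR * n1R) = Cv * (c / 2 * kR ^+ 2) * (nR * n1R) by ring.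
    exact: h1.
  have h3 : c / 2 * kR * nR * n1R <= c / 2 * kR * nR * nR.
    rewrite ler_pM2l; first by rewrite en; lra.
    rewrite !mulr_gt0 // ?en; lra.
  have h4 : 3 / 4 * c * nR ^+ 2 * k2R <= x * k2R by rewrite ler_pM2r //; lra.
  have h5 : 0 < c * nR ^+ 2 by rewrite mulr_gt0 // exprn_gt0 // en; lra.
  have : 3 / 4 * c * nR ^+ 2 * k2R <= c / 2 * (k2R + 1) * nR ^+ 2.
    apply: (le_trans h4); apply: (le_trans h2); apply: (le_trans h3).
    by rewrite -ek expr2 !mulrA.
  nra.
exists S; move: SE; rewrite inE => /eqP cS.
have rS : n_edges_in ER S = 0%N.
  apply/eqP; apply/negPn/negP; rewrite -lt0n => r1.
  have := @edges_le V EB S; rewrite cS -(ler_nat R) natrM -/kR => bS.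
  have : 1 <= (n_edges_in ER S)%:R :> R by rewrite ler1n.
  move: HS; rewrite /F /M expr2.
  have : 0 <= c / 2 * (kR * kR) by rewrite mulr_ge0 // ?divr_ge0 ?mulr_ge0 // ?ltW // (le_trans _ kR1).
  nra.
split => //.
- by rewrite cS /k; lia.
- move: HS; rewrite /F rS mulr0 subr0 cS -/kR => h; exact: ltW.
Qed.
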